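(* Let $T$ be an interface element and $\overline X\in l$ fixed. Define the piecewise $2\times4$ matrix function $V(X)=(X-\overline X)^T\otimes I_2$ for $X\in\overline T^+$ and $V(X)=\big((X-\overline X)^T\otimes I_2\big)\overline M^+$ for $X\in\overline T^-$. Then each column of $V$ is an IFE function on $T$ (with respect to any $F\in l$), i.e., it belongs to the local IFE space $\mathbf S_h(T)$.
   Context: Lamé parameters $\lambda^\pm,\mu^\pm>0$; stress $\sigma^s(\mathbf v)=\lambda^s(\nabla\cdot\mathbf v)I+2\mu^s\epsilon(\mathbf v)$. $T$ is a triangle with $\Pi_T=[\mathrm{span}\{1,x,y\}]^2$, or a square with $\Pi_T=[\mathrm{span}\{1,x,y,xy\}]^2$ or $[\mathrm{span}\{1,x,y,x^2-y^2\}]^2$. $\Gamma$ meets $\partial T$ at $D,E$; $l$ is the line through them with unit normal $\bar{\mathbf n}=(\bar n_1,\bar n_2)$, splitting $T$ into $\overline T^\pm$. An IFE function w.r.t. $F\in l$ is piecewise $\boldsymbol\phi^s\in\Pi_T$ on $\overline T^s$ with $\boldsymbol\phi^-=\boldsymbol\phi^+$ on $l$, (square cases) equal coefficient vectors of $xy$ (resp. $x^2-y^2$) in $\boldsymbol\phi^\pm$, and $\sigma^+(\boldsymbol\phi^+)(F)\bar{\mathbf n}=\sigma^-(\boldsymbol\phi^-)(F)\bar{\mathbf n}$; $\mathbf S_h(T)$ is the space of these functions (assumed unisolvent, i.e. spanned by the nodal IFE shape functions). $\overline N^s$ is the $4\times4$ matrix with rows $((\lambda^s+2\mu^s)\bar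 n_1,\mu^s\bar n_2,\mu^s\bar n_2,\lambda^s\bar n_1)$, $(\lambda^s\bar n_2,\mu^s\bar n_1,\mu^s\bar n_1,(\lambda^s+2\mu^s)\bar n_2)$, $(-\bar n_2,0,\bar n_1,0)$, $(0,-\bar n_2,0,\bar n_1)$; $\overline M^+=(\overline N^-)^{-1}\overline N^+$. $\otimes$ is the Kronecker product. *)

(* Defs.v *)
From HB Require Import structures.
From mathcomp Require Import all_boot all_order all_algebra.
Set Implicit Arguments. Unset Strict Implicit. Unset Printing Implicit Defensive.
Import Order.TTheory GRing.Theory Num.Theory.
Local Open Scope ring_scope.

Section IFE.
Variable R : realFieldType.

Definition i0 : 'I_2 := @Ordinal 2 0 isT.
Definition i1 : 'I_2 := @Ordinal 2 1 isT.
Definition px (X : 'cV[R]_2) : R := X i0 ord0.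
Definition py (X : 'cV[R]_2) : R := X i1 ord0.
Definition dot (X Y : 'cV[R]_2) : R := px X * px Y + py X * py Y.

(* Kronecker product, standard index convention:
   (A (x) B)_{(i1 p + i2), (j1 q + j2)} = A i1 j1 * B i2 j2.
   (Stated for nonempty dimensions so that [inord] can be used; all uses
   here have positive dimensions.) *)
Definition kron m n p q (A : 'M[R]_(m.+1, n.+1)) (B : 'M[R]_(p.+1, q.+1))
  : 'M[R]_(m.+1 * p.+1, n.+1 * q.+1) :=
  \matrix_(i < m.+1 * p.+1, j < n.+1 * q.+1)
     (A (inord (i %/ p.+1)) (inord (j %/ q.+1)) * B (inord (i %% p.+1)) (inord (j %% q.+1))).

Inductive elem_kind := Tri | SqBil | SqRot.

Definition triangle_set (A1 A2 A3 : 'cV[R]_2) (X : 'cV[R]_2) : Prop :=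
  exists l1 l2 l3 : R, [/\ 0 <= l1, 0 <= l2, 0 <= l3, l1 + l2 + l3 = 1 &
                        X = l1 *: A1 + l2 *: A2 + l3 *: A3].
Definition noncollinear (A1 A2 A3 : 'cV[R]_2) : Prop :=
  (px A2 - px A1) * (py A3 - py A1) - (py A2 - py A1) * (px A3 - px A1) != 0.
Definition square_set (P : 'cV[R]_2) (h : R) (X : 'cV[R]_2) : Prop :=
  (px P <= px X <= px P + h) /\ (py P <= py X <= py P + h).

Definition is_element (k : elem_kind) (T : 'cV[R]_2 -> Prop) : Prop :=
  match k with
  | Tri => exists A1 A2 A3, noncollinear A1 A2 A3 /\ forall X, T X <-> triangle_set A1 A2 A3 X
  | _ => exists P h, 0 < h /\ forall X, T X <-> square_set P h X
  end.

Definition on_boundary (T : 'cV[R]_2 -> Prop) (D : 'cV[R]_2) : Prop :=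
  T D /\ forall e : R, 0 < e -> exists Y, ~ T Y /\ dot (Y - D) (Y - D) < e.

Definition on_line (D nb X : 'cV[R]_2) : Prop := dot (X - D) nb = 0.
Definition Tplus (T : 'cV[R]_2 -> Prop) (D nb X : 'cV[R]_2) : Prop :=
  T X /\ 0 <= dot (X - D) nb.
Definition Tminus (T : 'cV[R]_2 -> Prop) (D nb X : 'cV[R]_2) : Prop :=
  T X /\ dot (X - D) nb <= 0.

(* An element of Pi_T, given by its coefficient vectors:
   phi(x,y) = pa + x pb + y pc + q(x,y) pd, q = 0 (Tri), xy (SqBil), x^2-y^2 (SqRot). *)
Record piece := Piece { pa : 'cV[R]_2; pb : 'cV[R]_2; pc : 'cV[R]_2; pd : 'cV[R]_2 }.

Definition qfun (k : elem_kind) (X : 'cV[R]_2) : R :=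
  match k with Tri => 0 | SqBil => px X * py X | SqRot => px X ^+ 2 - py X ^+ 2 end.
Definition dxq (k : elem_kind) (X : 'cV[R]_2) : R :=
  match k with Tri => 0 | SqBil => py X | SqRot => 2 * px X end.
Definition dyq (k : elem_kind) (X : 'cV[R]_2) : R :=
  match k with Tri => 0 | SqBil => px X | SqRot => - (2 * py X) end.

Definition in_PiT (k : elem_kind) (p : piece) : Prop := k = Tri -> pd p = 0.

Definition peval (k : elem_kind) (p : piece) (X : 'cV[R]_2) : 'cV[R]_2 :=
  pa p + px X *: pb p + py X *: pc p + qfun k X *: pd p.

(* Gradient matrix (grad phi)_{ij} = d phi_i / d x_j at X. *)
Definition pgrad (k : elem_kind) (p : piece) (X : 'cV[R]_2) : 'M[R]_2 :=
  \matrix_(i < 2, j < 2)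
    (if j == i0 then (pb p + dxq k X *: pd p) i ord0
                else (pc p + dyq k X *: pd p) i ord0).

(* sigma(v) = lambda (div v) I + 2 mu eps(v), eps(v) = (grad v + grad v^T)/2. *)
Definition stress (lam mu : R) (G : 'M[R]_2) : 'M[R]_2 :=
  (lam * \tr G)%:M + mu *: (G + G^T).

Definition IFE_function (k : elem_kind) (T : 'cV[R]_2 -> Prop) (D nb : 'cV[R]_2)
    (lamp mup lamm mum : R) (F : 'cV[R]_2) (u : 'cV[R]_2 -> 'cV[R]_2) : Prop :=
  exists pp pm : piece,
    in_PiT k pp /\ in_PiT k pm /\
        (forall X, Tplus T D nb X -> u X = peval k pp X) /\
        (forall X, Tminus T D nb X -> u X = peval k pm X) /\
        (forall X, on_line D nb X -> peval k pm X = peval k pp X) /\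
        (k <> Tri -> pd pp = pd pm) /\
        stress lamp mup (pgrad k pp F) *m nb = stress lamm mum (pgrad k pm F) *m nb.

Definition Nmat (lam mu : R) (nb : 'cV[R]_2) : 'M[R]_4 :=
  let n1 := px nb in let n2 := py nb in
  \matrix_(i < 4, j < 4)
   nth 0 (nth [::]
     [:: [:: (lam + 2 * mu) * n1; mu * n2; mu * n2; lam * n1];
         [:: lam * n2; mu * n1; mu * n1; (lam + 2 * mu) * n2];
         [:: - n2; 0; n1; 0];
         [:: 0; - n2; 0; n1]] i) j.

Definition Mplus (lamp mup lamm mum : R) (nb : 'cV[R]_2) : 'M[R]_4 :=
  invmx (Nmat lamm mum nb) *m Nmat lamp mup nb.

Definition Vmat (lamp mup lamm mum : R) (D nb Xbar X : 'cV[R]_2) : 'M[R]_(1 * 2, 2 * 2) :=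
  if 0 <= dot (X - D) nb then kron (X - Xbar)^T (1%:M : 'M[R]_2)
  else kron (X - Xbar)^T (1%:M : 'M[R]_2) *m Mplus lamp mup lamm mum nb.

End IFE.

(* Main.v *)
Require Import Defs.
From HB Require Import structures.
From mathcomp Require Import all_boot all_order all_algebra.
From mathcomp Require Import ring lra.
Import Order.TTheory GRing.Theory Num.Theory.
Local Open Scope ring_scope.

Section S.
Variable R : realFieldType.

Definition j0 : 'I_4 := @Ordinal 4 0 isT.
Definition j1 : 'I_4 := @Ordinal 4 1 isT.
Definition j2 : 'I_4 := @Ordinal 4 2 isT.
Definition j3 : 'I_4 := @Ordinal 4 3 isT.

Lemma ord2P (P : 'I_2 -> Prop) : P (i0) -> P (i1) -> forall i, P i.
Proof.
move=> H0 H1 [[|[|n]] Hn] //.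
- by have -> : Ordinal Hn = i0 by apply/val_inj.
- by have -> : Ordinal Hn = i1 by apply/val_inj.
Qed.

Lemma ord4P (P : 'I_4 -> Prop) : P j0 -> P j1 -> P j2 -> P j3 -> forall i, P i.
Proof.
move=> H0 H1 H2 H3 [[|[|[|[|n]]]] Hn] //.
- by have -> : Ordinal Hn = j0 by apply/val_inj.
- by have -> : Ordinal Hn = j1 by apply/val_inj.
- by have -> : Ordinal Hn = j2 by apply/val_inj.
- by have -> : Ordinal Hn = j3 by apply/val_inj.
Qed.

Definition Lm (v : 'cV[R]_2) : 'M[R]_(2, 4) :=
  \matrix_(i < 2, j < 4) nth 0 (nth [::] [:: [:: px v; 0; py v; 0]; [:: 0; px v; 0; py v]] i) j.

Lemma inordE (n : nat) (H : (n < 2)%N) : (inord n : 'I_2) = Ordinal H.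
Proof. by apply/val_inj; rewrite /= inordK. Qed.

Lemma dm0 : (0 %/ 2 = 0)%N. Proof. by []. Qed.
Lemma dm1 : (1 %/ 2 = 0)%N. Proof. by []. Qed.
Lemma dm2 : (2 %/ 2 = 1)%N. Proof. by []. Qed.
Lemma dm3 : (3 %/ 2 = 1)%N. Proof. by []. Qed.
Lemma dm4 : (0 %% 2 = 0)%N. Proof. by []. Qed.
Lemma dm5 : (1 %% 2 = 1)%N. Proof. by []. Qed.
Lemma dm6 : (2 %% 2 = 0)%N. Proof. by []. Qed.
Lemma dm7 : (3 %% 2 = 1)%N. Proof. by []. Qed.

Lemma inord20 : (inord 0 : 'I_2) = i0. Proof. by apply/val_inj; rewrite /= inordK. Qed.
Lemma inord21 : (inord 1 : 'I_2) = i1. Proof. by apply/val_inj; rewrite /= inordK. Qed.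
Lemma inord10 : (inord 0 : 'I_1) = ord0. Proof. by apply/val_inj; rewrite /= inordK. Qed.

Lemma LmE (v : 'cV[R]_2) : kron v^T (1%:M : 'M[R]_2) = Lm v.
Proof.
apply/matrixP; elim/ord2P => /=; elim/ord4P;
rewrite !mxE /= ?dm0 ?dm1 ?dm2 ?dm3 ?dm4 ?dm5 ?dm6 ?dm7 ?inord20 ?inord21 ?inord10 ?mxE /px /py /=;
by rewrite ?mulr1 ?mulr0.
Qed.

Definition e0 : 'cV[R]_2 := \col_i (i == i0)%:R.
Definition e1 : 'cV[R]_2 := \col_i (i == i1)%:R.

Lemma Lm_lin (X Xb : 'cV[R]_2) :
  Lm (X - Xb) = Lm (- Xb) + px X *: Lm e0 + py X *: Lm e1.
Proof.
apply/matrixP; elim/ord2P; elim/ord4P; rewrite !mxE /= /px /py ?mxE /=; ring.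
Qed.

Lemma col_lin (A B C : 'M[R]_(2,4)) (a b q : R) j :
  col j (A + a *: B + b *: C) = col j A + a *: col j B + b *: col j C + q *: 0.
Proof. by apply/matrixP => r c; rewrite !mxE mulr0 addr0. Qed.

Lemma detN (l m : R) nb :
  \det (Nmat l m nb) = (l + 2 * m) * m * (px nb ^+ 2 + py nb ^+ 2) ^+ 2.
Proof.
rewrite (expand_det_row _ ord0) !big_ord_recl big_ord0 /cofactor.
rewrite !(expand_det_row _ ord0) !big_ord_recl !big_ord0 /cofactor.
rewrite !(expand_det_row _ ord0) !big_ord_recl !big_ord0 /cofactor.
rewrite !det_mx11 !mxE /=.
ring.
Qed.

Lemma cont (lamp mup lamm mum : R) nb M (v : 'cV[R]_2) :
  px v * px nb + py v * py nb = 0 -> px nb * px nb + py nb * py nb = 1 ->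
  Nmat lamm mum nb *m M = Nmat lamp mup nb -> Lm v *m M = Lm v.
Proof.
move=> hv hn HM.
have [s [ea eb]] : exists s, px v = -(s * py nb) /\ py v = s * px nb.
  exists (py v * px nb - px v * py nb).
  have h1 := congr1 (fun z => px nb * z) hv.
  have h2 := congr1 (fun z => py nb * z) hv.
  have h3 := congr1 (fun z => px v * z) hn.
  have h4 := congr1 (fun z => py v * z) hn.
  simpl in *; split; lra.
apply/matrixP => r c.
have H2 := congr1 (fun A : 'M[R]_4 => A j2 c) HM.
have H3 := congr1 (fun A : 'M[R]_4 => A j3 c) HM.
move: H2 H3; elim/ord2P: r; elim/ord4P: c => /=;
rewrite !mxE !big_ord_recr !big_ord0 /= !mxE /= ea eb => H2 H3;
have H2' := congr1 (fun z => s * z) H2;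
have H3' := congr1 (fun z => s * z) H3; simpl in *;
first [ apply: (eq_trans _ (eq_trans H2' _)); ring | apply: (eq_trans _ (eq_trans H3' _)); ring ].
Qed.


Lemma pxe0 : px e0 = 1. Proof. by rewrite /px mxE. Qed.
Lemma pye0 : py e0 = 0. Proof. by rewrite /py mxE. Qed.
Lemma pxe1 : px e1 = 0. Proof. by rewrite /px mxE. Qed.
Lemma pye1 : py e1 = 1. Proof. by rewrite /py mxE. Qed.
Lemma w2 : (widen_ord (leqnSn 1) ord_max : 'I_2) = i0. Proof. by apply/val_inj. Qed.
Lemma om2 : (ord_max : 'I_2) = i1. Proof. by apply/val_inj. Qed.
Lemma o1 : (0 : 'I_1) = ord0. Proof. by apply/val_inj. Qed.

Lemma stressE k (F : 'cV[R]_2) (lamp mup lamm mum : R) nb M (A A' : 'cV[R]_2) (j : 'I_4) :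
  Nmat lamm mum nb *m M = Nmat lamp mup nb ->
  stress lamp mup (pgrad k (Piece A (col j (Lm e0)) (col j (Lm e1)) 0) F) *m nb
  = stress lamm mum (pgrad k (Piece A' (col j (Lm e0 *m M)) (col j (Lm e1 *m M)) 0) F) *m nb.
Proof.
move=> HM; apply/matrixP => r c; rewrite (ord1 c).
have H0 := congr1 (fun A : 'M[R]_4 => A j0 j) HM.
have H1 := congr1 (fun A : 'M[R]_4 => A j1 j) HM.
move: H0 H1; elim/ord2P: r; elim/ord4P: j => /=;
rewrite /stress /pgrad /mxtrace !mxE !big_ord_recr !big_ord0 /= !mxE /= => H0 H1;
rewrite ?pxe0 ?pye0 ?pxe1 ?pye1 ?w2 ?om2 ?o1 -/(px nb) -/(py nb);
rewrite !big_ord_recr !big_ord0 /= !mxE /= ?pxe0 ?pye0 ?pxe1 ?pye1;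
first [ apply: (eq_trans _ (eq_trans (esym H0) _)); ring
      | apply: (eq_trans _ (eq_trans (esym H1) _)); ring ].
Qed.

End S.
Arguments Lm {R}.
Arguments e0 {R}.
Arguments e1 {R}.

Theorem mainTheorem14 (R : realFieldType) (k : elem_kind) (T : 'cV[R]_2 -> Prop)
    (D E nb Xbar : 'cV[R]_2) (lamp mup lamm mum : R) :
  0 < lamp -> 0 < mup -> 0 < lamm -> 0 < mum ->
  is_element k T ->
  on_boundary T D -> on_boundary T E -> D != E ->
  dot nb nb = 1 -> dot (E - D) nb = 0 ->
  on_line D nb Xbar ->
  forall (F : 'cV[R]_2), on_line D nb F ->
  forall j : 'I_(2 * 2),
    IFE_function k T D nb lamp mup lamm mum F
      (fun X => col j (Vmat lamp mup lamm mum D nb Xbar X)).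
Proof.
move=> hl hm hl' hm' _ _ _ _ hnb hED hXb F hF j.
pose M := Mplus lamp mup lamm mum nb.
have HM : Nmat lamm mum nb *m M = Nmat lamp mup nb.
  rewrite /M /Mplus mulKVmx // unitmxE detN unitfE.
  have -> : px nb ^+ 2 + py nb ^+ 2 = 1 by rewrite !expr2.
  rewrite expr1n mulr1; apply: lt0r_neq0; apply: mulr_gt0 => //; lra.
have Hcont : forall X, on_line D nb X -> Lm (X - Xbar) *m M = Lm (X - Xbar).
  move=> X hX; apply: (@cont R lamp mup lamm mum nb); [|exact: hnb|exact: HM].
  transitivity (dot (X - D) nb - dot (Xbar - D) nb); first by rewrite /dot /px /py !mxE; ring.
  by move: hX hXb; rewrite /on_line => -> ->; rewrite subrr.
pose pp := Piece (col j (Lm (- Xbar))) (col j (Lm e0)) (col j (Lm e1)) 0.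
pose pm := Piece (col j (Lm (- Xbar) *m M)) (col j (Lm e0 *m M)) (col j (Lm e1 *m M)) 0.
have Hplus : forall X, col j (Lm (X - Xbar)) = peval k pp X.
  by move=> X; rewrite Lm_lin (@col_lin R _ _ _ _ _ (qfun k X)).
have Hminus : forall X, col j (Lm (X - Xbar) *m M) = peval k pm X.
  by move=> X; rewrite Lm_lin !mulmxDl -!scalemxAl (@col_lin R _ _ _ _ _ (qfun k X)).
exists pp, pm; split; first by [].
split; first by [].
split.
  by move=> X [_ hX]; rewrite /Vmat hX /= LmE.
split.
  move=> X [_ hX]; rewrite /Vmat; case: ifP => h; rewrite LmE.
    rewrite -Hminus Hcont //; rewrite /on_line; apply/eqP; by rewrite eq_le hX h.
  exact (Hminus X).
split.
  by move=> X hX; rewrite -Hplus -Hminus Hcont.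
split; first by [].
exact: stressE.
Qed.
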